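(* Let $s\ge 3$ and $n\ge 1$ be integers and let $\{M_1,\dots,M_{s-2}\}$ be a collection of mutually orthogonal sudoku solutions of order $n^2$ with symbols $\{0,1,\dots,n^2-1\}$. The collection is strongly orthogonal if and only if all of the following hold: (i) for every $i\in\{1,\dots,s-2\}$, every canonical $n\times n$ subsquare of $R(M_i)$ is a Latin square (on the symbols $\{0,\dots,n-1\}$); (ii) for every ordered pair of distinct $i,j\in\{1,\dots,s-2\}$ (relevant only when $s\ge 4$): (a) the composite solution $N_{ij}$ is a sudoku solution; (b) each large row of $R(M_i)$ is orthogonal to the corresponding large row of $M_j$; (c) each large column of $R(M_i)$ is orthogonal to the corresponding large column of $M_j$; (iii) for all pairwise distinct $i,j,k\in\{1,\dots,s-2\}$ (relevant only when $s\ge 5$): (a) each large row of $N_{ij}$ is orthogonal to the corresponding large row of $R(M_k)$; (b) each large column of $N_{ij}$ is orthogonal to the corresponding large column of $R(M_k)$; (c) $N_{ij}$ and $M_k$ are orthogonal; (iv) for all pairwise distinct $i,j,k,l\in\{1,\dots,s-2\}$ (relevant only when $s\ge 6$): $N_{ij}$ and $N_{kl}$ are orthogonal.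
   Context: A sudoku solution of order $n^2$ is an $n^2\times n^2$ array with entries in $\{0,1,\dots,n^2-1\}$ in which every symbol appears exactly once in each row, each column, and each of the $n^2$ canonical $n\times n$ subsquares (rows $an,\dots,an+n-1$, columns $bn,\dots,bn+n-1$). Rows and columns are numbered from $0$ (top, left). A location is identified with $(x_1,x_2,x_3,x_4)\in\mathbb{Z}_n^4$, meaning row $x_1n+x_2$ and column $x_3n+x_4$. The large row $x_1$ is the $n\times n^2$ subarray of rows $x_1n,\dots,x_1n+n-1$; the large column $x_3$ is the $n^2\times n$ subarray of columns $x_3n,\dots,x_3n+n-1$. Two arrays of the same shape with symbol sets $A$, $B$ with $|A||B|$ equal to the number of cells are orthogonal if upon superimposition every ordered pair in $A\times B$ appears exactly once. Every $x\in\{0,\dots,n^2-1\}$ is written $x=b_n\cdot n+b_1$ with $b_n,b_1\in\{0,\dots,n-1\}$; $b_n$ is the radix digit and $b_1$ the units digit. For a sudoku solution $M$, the radix solution $R(M)$ is the $n^2\times n^2$ array whose entry at each location is the radix digit of the entry of $M$ there. For sudoku solutions $M_i,M_j$, the composite solution $N_{ij}$ is the $n^2\times n^2$ array whose entry at each location is $n\cdot r_i+r_j$, where $r_i,r_j$ are the entries of $R(M_i),R(M_j)$ at that location. An ordered orthogonal array of type $\mathrm{OOA}(4,s,2,v)$ is a $2s\times v^4$ array over an alphabet of size $v$, whose rows are labeled $(i,j)$, $1\le i\le s$, $j\in\{1,2\}$, such that for every top-justified set $T$ of $4$ rows (i.e. $(i,2)\in T$ implies $(i,1)\in T$) the subarray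 formed by the rows of $T$ contains each $4$-tuple over the alphabet exactly once as a column. Given sudoku solutions $M_1,\dots,M_{s-2}$ of order $n^2$, the associated array is the $2s\times n^4$ array over $\{0,\dots,n-1\}$ having one column for each location $(x_1,x_2,x_3,x_4)\in\mathbb{Z}_n^4$, whose entries in rows $(1,1),(1,2),(2,1),(2,2)$ are $x_1,x_2,x_3,x_4$, and whose entries in rows $(i+2,1)$ and $(i+2,2)$ are the radix digit and units digit, respectively, of the symbol of $M_i$ at that location ($1\le i\le s-2$). A collection $\{M_1,\dots,M_{s-2}\}$ of mutually orthogonal sudoku solutions of order $n^2$ is strongly orthogonal if its associated array is an $\mathrm{OOA}(4,s,2,n)$. *)

(* Defs.v *)
From mathcomp Require Import all_boot.
Set Implicit Arguments. Unset Strict Implicit. Unset Printing Implicit Defensive.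

(* A location (x1,x2,x3,x4) in Z_n^4: row x1*n+x2, column x3*n+x4. *)
Definition loc (n : nat) : finType := ('I_n * 'I_n * 'I_n * 'I_n)%type.
Definition lx1 n (x : loc n) : 'I_n := x.1.1.1.
Definition lx2 n (x : loc n) : 'I_n := x.1.1.2.
Definition lx3 n (x : loc n) : 'I_n := x.1.2.
Definition lx4 n (x : loc n) : 'I_n := x.2.

Definition array (n : nat) := loc n -> nat.

Definition sudoku (n : nat) (M : array n) : Prop :=
  [/\ forall x, M x < n * n,
      (forall (a b : 'I_n) (v : nat), v < n * n ->
         #|[set x : loc n | [&& lx1 x == a, lx2 x == b & M x == v]]| = 1),
      (forall (a b : 'I_n) (v : nat), v < n * n ->
         #|[set x : loc n | [&& lx3 x == a, lx4 x == b & M x == v]]| = 1)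
    & (forall (a b : 'I_n) (v : nat), v < n * n ->
         #|[set x : loc n | [&& lx1 x == a, lx3 x == b & M x == v]]| = 1)].

Definition orth_on (n : nat) (D : {set loc n}) (p q : nat) (f g : array n) : Prop :=
  forall u v, u < p -> v < q ->
    #|[set x in D | (f x == u) && (g x == v)]| = 1.

Definition large_row (n : nat) (a : 'I_n) : {set loc n} := [set x | lx1 x == a].
Definition large_col (n : nat) (a : 'I_n) : {set loc n} := [set x | lx3 x == a].

Definition radix (n : nat) (M : array n) : array n := fun x => M x %/ n.
Definition composite (n : nat) (Mi Mj : array n) : array n :=
  fun x => n * radix Mi x + radix Mj x.

Definition subsquares_latin (n : nat) (A : array n) : Prop :=
  (forall (a c b : 'I_n) (v : nat), v < n ->
     #|[set x : loc n | [&& lx1 x == a, lx3 x == c, lx2 x == b & A x == v]]| = 1)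
  /\
  (forall (a c d : 'I_n) (v : nat), v < n ->
     #|[set x : loc n | [&& lx1 x == a, lx3 x == c, lx4 x == d & A x == v]]| = 1).

(* Ordered orthogonal array OOA(4, s, 2, v), rows labelled (i, j) with
   i : 'I_s, j : 'I_2 (0-based versions of (i,j), 1<=i<=s, j in {1,2}),
   columns indexed by a finite type C with #|C| = v^4. *)
Definition top_justified (s : nat) (T : {set 'I_s * 'I_2}) : Prop :=
  forall i : 'I_s, (i, ord_max : 'I_2) \in T -> (i, ord0 : 'I_2) \in T.

Definition is_OOA4 (s v : nat) (C : finType) (A : 'I_s * 'I_2 -> C -> nat) : Prop :=
  #|C| = v ^ 4 /\
  forall T : {set 'I_s * 'I_2}, #|T| = 4 -> top_justified T ->
    forall f : 'I_s * 'I_2 -> 'I_v,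
      #|[set c : C | [forall r in T, A r c == f r]]| = 1.

(* Associated array of M_1..M_{s-2}; the family is indexed by nat, M i for
   i < s-2 being M_{i+1}. *)
Definition assoc_array (s n : nat) (M : nat -> array n)
  (r : 'I_s * 'I_2) (x : loc n) : nat :=
  match val r.1 with
  | 0 => if val r.2 == 0 then val (lx1 x) else val (lx2 x)
  | 1 => if val r.2 == 0 then val (lx3 x) else val (lx4 x)
  | k.+2 => if val r.2 == 0 then M k x %/ n else M k x %% n
  end.

Definition strongly_orthogonal (s n : nat) (M : nat -> array n) : Prop :=
  @is_OOA4 s n (loc n) (@assoc_array s n M).

(* Main.v *)
Require Import Defs.
From mathcomp Require Import all_boot.
From mathcomp Require Import zify.
Set Implicit Arguments. Unset Strict Implicit. Unset Printing Implicit Defensive.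

Lemma div_digits n c d : d < n -> (n * c + d) %/ n = c.
Proof.
move=> dn; have n0 : 0 < n by case: n dn.
by rewrite mulnC divnMDl // divn_small // addn0.
Qed.

Lemma mod_digits n c d : d < n -> (n * c + d) %% n = d.
Proof. by move=> dn; rewrite mulnC modnMDl modn_small. Qed.

Lemma digit_eq n a b u : b < n -> (n * a + b == u) = (a == u %/ n) && (b == u %% n).
Proof.
move=> bn; apply/eqP/andP => [<-|[/eqP-> /eqP->]].
  by rewrite div_digits // mod_digits.
by rewrite mulnC -divn_eq.
Qed.

Lemma digit_lt n a b : a < n -> b < n -> n * a + b < n * n.
Proof. move=> an bn; nia. Qed.

Lemma div_lt n u : u < n * n -> u %/ n < n.
Proof. move=> un; have n0 : 0 < n by case: n un. by rewrite ltn_divLR. Qed.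

Definition sym s n (M : nat -> array n) (i : 'I_s) (x : loc n) : nat :=
  match val i with
  | 0 => n * lx1 x + lx2 x
  | 1 => n * lx3 x + lx4 x
  | k.+2 => M k x end.

Lemma assocE s n (M : nat -> array n) (r : 'I_s * 'I_2) x : 0 < n ->
  assoc_array M r x = if val r.2 == 0 then sym M r.1 x %/ n else sym M r.1 x %% n.
Proof.
move=> n0; rewrite /assoc_array /sym; case: r => [[[|[|k]] Hi] j] /=;
  case: (val j == 0) => //.
- by rewrite div_digits.
- by rewrite mod_digits.
- by rewrite div_digits.
- by rewrite mod_digits.
Qed.

Lemma card_tj s (T : {set 'I_s * 'I_2}) : top_justified T ->
  #|T| = (#|[set i | (i, ord_max) \in T]|).*2 +
         #|[set i | ((i, ord0) \in T) && ((i, ord_max) \notin T)]|.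
Proof.
move=> tj.
rewrite -!sum1_card -muln2 big_distrl /= !(big_mkcond (mem [set _ | _])) -big_split /=.
rewrite big_mkcond /= (eq_bigr (fun p => if (p.1, p.2) \in T then 1 else 0)); last by case.
rewrite -(pair_bigA _ (fun i j => if (i, j) \in T then 1 else 0)) /=.
apply: eq_bigr => i _.
rewrite big_ord_recl big_ord1 !inE.
have -> : lift ord0 ord0 = ord_max :> 'I_2 by apply/val_inj.
have := tj i.
by case: ((i, ord_max) \in T); case: ((i, ord0) \in T) => // /(_ isT).
Qed.

Lemma bridge s n (M : nat -> array n) (T : {set 'I_s * 'I_2}) (D S : seq 'I_s)
  (f : 'I_s * 'I_2 -> 'I_n) (vd vs : 'I_s -> nat) x :
  0 < n -> top_justified T ->
  (forall i, (i \in D) = ((i, ord_max) \in T)) ->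
  (forall i, (i \in S) = ((i, ord0) \in T) && ((i, ord_max) \notin T)) ->
  (forall i, i \in D -> vd i = n * f (i, ord0) + f (i, ord_max)) ->
  (forall i, i \in S -> vs i = f (i, ord0)) ->
  [forall r in T, assoc_array M r x == f r] =
  all (fun i => sym M i x == vd i) D && all (fun i => sym M i x %/ n == vs i) S.
Proof.
move=> n0 tj hD hS hvd hvs.
apply/forall_inP/andP => [H|[/allP HD /allP HS]].
  split; apply/allP => i iD.
    have iT : (i, ord_max) \in T by rewrite -hD.
    have h0 := H (i, ord0) (tj _ iT); have h1 := H (i, ord_max) iT.
    rewrite !assocE //= in h0 h1.
    by rewrite hvd // eq_sym digit_eq // eq_sym h0 eq_sym h1.
  have iT : (i, ord0) \in T by move: iD; rewrite hS => /andP[].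
  have h0 := H (i, ord0) iT; rewrite assocE //= in h0.
  by rewrite hvs.
move=> [i j] rT.
case: (boolP ((i, ord_max) \in T)) => hm.
  have iD : i \in D by rewrite hD.
  rewrite assocE //=.
  have := HD i iD; rewrite /= hvd // => /eqP ->.
  case: j rT => [[|[|j]] Hj] rT /=.
  - by rewrite div_digits // (_ : Ordinal Hj = ord0) //; apply/val_inj.
  - by rewrite mod_digits // (_ : Ordinal Hj = ord_max) //; apply/val_inj.
  - by [].
have hj : j = ord0.
  apply/val_inj; case: j rT => [[|[|j]] Hj] rT //=.
  have ho : Ordinal Hj = ord_max by apply/val_inj.
  by rewrite ho in rT; rewrite rT in hm.

subst j.
have iS : i \in S by rewrite hS rT hm.
by have := HS i iS; rewrite hvs // assocE.
Qed.

Definition G s n (M : nat -> array n) (D S : seq 'I_s) : Prop :=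
  forall vd vs : 'I_s -> nat,
    (forall i, i \in D -> vd i < n * n) -> (forall i, i \in S -> vs i < n) ->
    #|[set x : loc n | all (fun i => sym M i x == vd i) D &&
                       all (fun i => sym M i x %/ n == vs i) S]| = 1.

Definition valid s (D S : seq 'I_s) : Prop :=
  uniq (map val (D ++ S)) /\ (size D).*2 + size S = 4.

Lemma lemA s n (M : nat -> array n) : 0 < n ->
  strongly_orthogonal s M <-> (forall D S : seq 'I_s, valid D S -> G M D S).
Proof.
move=> n0; split.
  move=> [_ H] D S [hu hsz] vd vs hvd hvs.
  rewrite map_inj_uniq in hu; last exact: val_inj.
  move: hu; rewrite cat_uniq => /and3P[uD dis uS].
  have SD : forall i, i \in S -> i \notin D.
    by move=> i iS; apply/negP => iD; move/hasPn: dis => /(_ i iS); rewrite iD.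
  have m0 : (ord_max == ord0 :> 'I_2) = false by [].
  pose T := [set r : 'I_s * 'I_2 | (r.1 \in D) || ((r.1 \in S) && (r.2 == ord0))].
  have tj : top_justified T.
    by move=> i; rewrite !inE /= => /orP[->//|/andP[_]].
  pose g (r : 'I_s * 'I_2) := if r.1 \in D then (if r.2 == ord0 then vd r.1 %/ n else vd r.1)
                             else vs r.1.
  pose f (r : 'I_s * 'I_2) : 'I_n := Ordinal (ltn_pmod (g r) n0).
  have hD : forall i, (i \in D) = ((i, ord_max) \in T) by move=> i; rewrite !inE /= m0 andbF orbF.
  have hS : forall i, (i \in S) = ((i, ord0) \in T) && ((i, ord_max) \notin T).
    move=> i; rewrite !inE /= m0 andbF orbF eqxx andbT.
    by case: (boolP (i \in S)) => iS; [rewrite (negbTE (SD _ iS)) | case: (i \in D)].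
  have cT : #|T| = 4.
    rewrite card_tj //.
    rewrite -hsz -(card_uniqP uD) -(card_uniqP uS).
    congr (_.*2 + _); apply: eq_card => i; by rewrite inE ?hD ?hS.
  have := H T cT tj f.
  move=> h; rewrite -[RHS]h; apply: eq_card => x; rewrite !inE.
  symmetry; apply: bridge => // i iD.
    rewrite /f /g /= iD /= modn_small ?div_lt ?hvd //.
    by rewrite mulnC -divn_eq.
  by rewrite /f /g /= (negbTE (SD _ iD)) modn_small ?hvs.
move=> HG; split.
  by rewrite /loc !card_prod !card_ord !expnS expn0 muln1 !mulnA.
move=> T cT tj f.
pose D := enum [set i | (i, ord_max) \in T].
pose S := enum [set i | ((i, ord0) \in T) && ((i, ord_max) \notin T)].
have hD : forall i, (i \in D) = ((i, ord_max) \in T) by move=> i; rewrite mem_enum inE.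
have hS : forall i, (i \in S) = ((i, ord0) \in T) && ((i, ord_max) \notin T).
  by move=> i; rewrite mem_enum inE.
have vDS : valid D S.
  split.
    rewrite map_inj_uniq; last exact: val_inj.
    rewrite cat_uniq !enum_uniq /= andbT.
    by apply/hasPn => i; rewrite hS hD => /andP[_].
  by rewrite -!cardE -card_tj.
have := HG D S vDS (fun i => n * f (i, ord0) + f (i, ord_max)) (fun i => f (i, ord0)).
move=> /(_ (fun i _ => digit_lt (ltn_ord _) (ltn_ord _)) (fun i _ => ltn_ord _)).
move=> h; rewrite -[RHS]h; apply: eq_card => x; rewrite !inE.
by apply: bridge.
Qed.


Ltac bnd f := let o := fresh "o" in move=> o; rewrite !inE;
  repeat (case/orP; [move/eqP-> | ]); try move/eqP->; rewrite /f /= ?eqxx /=; try exact: ltn_ord; try done.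

Ltac closeb := by do ![case: (_ == _)].

Lemma B1_i s n (M : nat -> array n) : 3 <= s -> 0 < n ->
  (forall k x, k < s - 2 -> M k x %/ n < n) ->
  (forall D S : seq 'I_s, valid D S -> G M D S) ->
  (forall i, i < s - 2 -> subsquares_latin (radix (M i))).
Proof.
move=> s3 n0 Hdb HG i Hi.
have H0 : 0 < s by lia.
have H1 : 1 < s by lia.
have Hi2 : i.+2 < s by lia.
split.
  move=> a c b v vn.
  pose vd := fun _ : 'I_s => n * a + b.
  pose vs := fun o : 'I_s => if val o == 1 then val c else v.
  have hd : forall o, o \in [:: Ordinal H0] -> vd o < n * n.
    by bnd vd; apply: digit_lt.
  have hs : forall o, o \in [:: Ordinal H1; Ordinal Hi2] -> vs o < n by bnd vs.
  rewrite -[RHS](HG [:: Ordinal H0] [:: Ordinal H1; Ordinal Hi2] (conj erefl erefl) _ _ hd hs).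
  apply: eq_card => x; rewrite !inE /sym /vd /vs /= !andbT /radix.
  rewrite -!val_eqE /= digit_eq ?div_digits ?mod_digits //; closeb.
move=> a c d v vn.
pose vd := fun _ : 'I_s => n * c + d.
pose vs := fun o : 'I_s => if val o == 0 then val a else v.
have hd : forall o, o \in [:: Ordinal H1] -> vd o < n * n.
  by bnd vd; apply: digit_lt.
have hs : forall o, o \in [:: Ordinal H0; Ordinal Hi2] -> vs o < n by bnd vs.
rewrite -[RHS](HG [:: Ordinal H1] [:: Ordinal H0; Ordinal Hi2] (conj erefl erefl) _ _ hd hs).
apply: eq_card => x; rewrite !inE /sym /vd /vs /= !andbT /radix.
rewrite -!val_eqE /= digit_eq ?div_digits ?mod_digits //.
closeb.
Qed.

Lemma B1_ii s n (M : nat -> array n) : 3 <= s -> 0 < n ->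
  (forall k x, k < s - 2 -> M k x %/ n < n) ->
  (forall D S : seq 'I_s, valid D S -> G M D S) ->
  (forall i j, i < s - 2 -> j < s - 2 -> i != j ->
          [/\ sudoku (composite (M i) (M j)),
              (forall a : 'I_n,
                 orth_on (large_row a) n (n * n) (radix (M i)) (M j))
            & (forall a : 'I_n,
                 orth_on (large_col a) n (n * n) (radix (M i)) (M j))]).
Proof.
move=> s3 n0 Hdb HG i j Hi Hj ij.
have H0 : 0 < s by lia.
have H1 : 1 < s by lia.
have Hi2 : i.+2 < s by lia.
have Hj2 : j.+2 < s by lia.
have ji : (j.+2 == i.+2) = false by rewrite !eqSS eq_sym (negbTE ij).
have ij2 : (i.+2 == j.+2) = false by rewrite !eqSS (negbTE ij).
have u1 : valid [:: Ordinal H0] [:: Ordinal Hi2; Ordinal Hj2].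
  split => //=; rewrite ?inE; lia.
have u2 : valid [:: Ordinal H1] [:: Ordinal Hi2; Ordinal Hj2].
  split => //=; rewrite ?inE; lia.
have u3 : valid [::] [:: Ordinal H0; Ordinal H1; Ordinal Hi2; Ordinal Hj2].
  split => //=; rewrite ?inE; lia.
have u4 : valid [:: Ordinal Hj2] [:: Ordinal H0; Ordinal Hi2].
  split => //=; rewrite ?inE; lia.
have u5 : valid [:: Ordinal Hj2] [:: Ordinal H1; Ordinal Hi2].
  split => //=; rewrite ?inE; lia.
have hdi := fun x => Hdb i x Hi.
have hdj := fun x => Hdb j x Hj.
split; first split.
- by move=> x; rewrite /composite /radix digit_lt.
- move=> a b v vn.
  pose vd := fun _ : 'I_s => n * a + b.
  pose vs := fun o : 'I_s => if val o == i.+2 then v %/ n else v %% n.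
  have hd : forall o, o \in [:: Ordinal H0] -> vd o < n * n.
    by bnd vd; apply: digit_lt.
  have hs : forall o, o \in [:: Ordinal Hi2; Ordinal Hj2] -> vs o < n.
    by bnd vs; rewrite ?ji ?div_lt ?ltn_pmod.
  rewrite -[RHS](HG _ _ u1 _ _ hd hs).
  apply: eq_card => x; rewrite !inE /sym /vd /vs /= !andbT /composite /radix ?eqxx ?ji.
  rewrite -!val_eqE /= !digit_eq ?div_digits ?mod_digits ?ltn_ord ?hdj //; closeb.
- move=> a b v vn.
  pose vd := fun _ : 'I_s => n * a + b.
  pose vs := fun o : 'I_s => if val o == i.+2 then v %/ n else v %% n.
  have hd : forall o, o \in [:: Ordinal H1] -> vd o < n * n.
    by bnd vd; apply: digit_lt.
  have hs : forall o, o \in [:: Ordinal Hi2; Ordinal Hj2] -> vs o < n.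
    by bnd vs; rewrite ?ji ?div_lt ?ltn_pmod.
  rewrite -[RHS](HG _ _ u2 _ _ hd hs).
  apply: eq_card => x; rewrite !inE /sym /vd /vs /= !andbT /composite /radix ?eqxx ?ji.
  rewrite -!val_eqE /= !digit_eq ?div_digits ?mod_digits ?ltn_ord ?hdj //; closeb.
- move=> a b v vn.
  pose vd := fun _ : 'I_s => 0.
  pose vs := fun o : 'I_s => match val o with 0 => val a | 1 => val b
     | m => if m == i.+2 then v %/ n else v %% n end.
  have hd : forall o, o \in [::] -> vd o < n * n by [].
  have hs : forall o, o \in [:: Ordinal H0; Ordinal H1; Ordinal Hi2; Ordinal Hj2] -> vs o < n.
    by bnd vs; rewrite ?ji ?div_lt ?ltn_pmod.
  rewrite -[RHS](HG _ _ u3 _ _ hd hs).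
  apply: eq_card => x; rewrite !inE /sym /vd /vs /= !andbT /composite /radix ?eqxx ?ji.
  rewrite -!val_eqE /= !digit_eq ?div_digits ?mod_digits ?ltn_ord ?hdj //; closeb.
- move=> a u v un vn.
  pose vd := fun _ : 'I_s => v.
  pose vs := fun o : 'I_s => if val o == 0 then val a else u.
  have hd : forall o, o \in [:: Ordinal Hj2] -> vd o < n * n by bnd vd.
  have hs : forall o, o \in [:: Ordinal H0; Ordinal Hi2] -> vs o < n by bnd vs.
  rewrite -[RHS](HG _ _ u4 _ _ hd hs).
  apply: eq_card => x; rewrite !inE /large_row ?inE /sym /vd /vs /= !andbT /radix.
  rewrite -!val_eqE /= ?div_digits ?ltn_ord //; closeb.
- move=> a u v un vn.
  pose vd := fun _ : 'I_s => v.
  pose vs := fun o : 'I_s => if val o == 1 then val a else u.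
  have hd : forall o, o \in [:: Ordinal Hj2] -> vd o < n * n by bnd vd.
  have hs : forall o, o \in [:: Ordinal H1; Ordinal Hi2] -> vs o < n by bnd vs.
  rewrite -[RHS](HG _ _ u5 _ _ hd hs).
  apply: eq_card => x; rewrite !inE /large_col ?inE /sym /vd /vs /= !andbT /radix.
  rewrite -!val_eqE /= ?div_digits ?ltn_ord //; closeb.
Qed.

Lemma B1_iii s n (M : nat -> array n) : 3 <= s -> 0 < n ->
  (forall k x, k < s - 2 -> M k x %/ n < n) ->
  (forall D S : seq 'I_s, valid D S -> G M D S) ->
       (forall i j k, i < s - 2 -> j < s - 2 -> k < s - 2 ->
          i != j -> i != k -> j != k ->
          [/\ (forall a : 'I_n,
                 orth_on (large_row a) (n * n) n
                   (composite (M i) (M j)) (radix (M k))),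
              (forall a : 'I_n,
                 orth_on (large_col a) (n * n) n
                   (composite (M i) (M j)) (radix (M k)))
            & orth_on setT (n * n) (n * n) (composite (M i) (M j)) (M k)]).
Proof.
move=> s3 n0 Hdb HG i j k Hi Hj Hk ij ik jk.
have H0 : 0 < s by lia.
have H1 : 1 < s by lia.
have Hi2 : i.+2 < s by lia.
have Hj2 : j.+2 < s by lia.
have Hk2 : k.+2 < s by lia.
have ji : (j.+2 == i.+2) = false by lia.
have ki : (k.+2 == i.+2) = false by lia.
have kj : (k.+2 == j.+2) = false by lia.
have u1 : valid [::] [:: Ordinal H0; Ordinal Hi2; Ordinal Hj2; Ordinal Hk2].
  split => //=; rewrite ?inE; lia.
have u2 : valid [::] [:: Ordinal H1; Ordinal Hi2; Ordinal Hj2; Ordinal Hk2].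
  split => //=; rewrite ?inE; lia.
have u3 : valid [:: Ordinal Hk2] [:: Ordinal Hi2; Ordinal Hj2].
  split => //=; rewrite ?inE; lia.
have hdi := fun x => Hdb i x Hi.
have hdj := fun x => Hdb j x Hj.
split.
- move=> a u v un vn.
  pose vd := fun _ : 'I_s => 0.
  pose vs := fun o : 'I_s => match val o with 0 => val a
     | m => if m == i.+2 then u %/ n else if m == j.+2 then u %% n else v end.
  have hd : forall o, o \in [::] -> vd o < n * n by [].
  have hs : forall o, o \in [:: Ordinal H0; Ordinal Hi2; Ordinal Hj2; Ordinal Hk2] -> vs o < n.
    by bnd vs; rewrite ?ji ?ki ?kj ?div_lt ?ltn_pmod.
  rewrite -[RHS](HG _ _ u1 _ _ hd hs).
  apply: eq_card => x; rewrite !inE /large_row ?inE /sym /vd /vs /= !andbT /composite /radix ?eqxx ?ji ?ki ?kj.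
  rewrite -!val_eqE /= !digit_eq ?div_digits ?mod_digits ?ltn_ord ?hdj //; closeb.
- move=> a u v un vn.
  pose vd := fun _ : 'I_s => 0.
  pose vs := fun o : 'I_s => match val o with 1 => val a
     | m => if m == i.+2 then u %/ n else if m == j.+2 then u %% n else v end.
  have hd : forall o, o \in [::] -> vd o < n * n by [].
  have hs : forall o, o \in [:: Ordinal H1; Ordinal Hi2; Ordinal Hj2; Ordinal Hk2] -> vs o < n.
    by bnd vs; rewrite ?ji ?ki ?kj ?div_lt ?ltn_pmod.
  rewrite -[RHS](HG _ _ u2 _ _ hd hs).
  apply: eq_card => x; rewrite !inE /large_col ?inE /sym /vd /vs /= !andbT /composite /radix ?eqxx ?ji ?ki ?kj.
  rewrite -!val_eqE /= !digit_eq ?div_digits ?mod_digits ?ltn_ord ?hdj //; closeb.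
- move=> u v un vn.
  pose vd := fun _ : 'I_s => v.
  pose vs := fun o : 'I_s => if val o == i.+2 then u %/ n else u %% n.
  have hd : forall o, o \in [:: Ordinal Hk2] -> vd o < n * n by bnd vd.
  have hs : forall o, o \in [:: Ordinal Hi2; Ordinal Hj2] -> vs o < n.
    by bnd vs; rewrite ?ji ?div_lt ?ltn_pmod.
  rewrite -[RHS](HG _ _ u3 _ _ hd hs).
  apply: eq_card => x; rewrite !inE /sym /vd /vs /= !andbT /composite /radix ?eqxx ?ji.
  rewrite !digit_eq ?div_digits ?mod_digits ?ltn_ord ?hdj //; closeb.
Qed.

Lemma B1_iv s n (M : nat -> array n) : 3 <= s -> 0 < n ->
  (forall k x, k < s - 2 -> M k x %/ n < n) ->
  (forall D S : seq 'I_s, valid D S -> G M D S) ->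
       (forall i j k l, i < s - 2 -> j < s - 2 -> k < s - 2 -> l < s - 2 ->
          uniq [:: i; j; k; l] ->
          orth_on setT (n * n) (n * n)
            (composite (M i) (M j)) (composite (M k) (M l))).
Proof.
move=> s3 n0 Hdb HG i j k l Hi Hj Hk Hl.
rewrite /= !inE !negb_or => /and4P[/and3P[ij ik il] /andP[jk jl] kl _].
have Hi2 : i.+2 < s by lia.
have Hj2 : j.+2 < s by lia.
have Hk2 : k.+2 < s by lia.
have Hl2 : l.+2 < s by lia.
have ji : (j.+2 == i.+2) = false by lia.
have ki : (k.+2 == i.+2) = false by lia.
have kj : (k.+2 == j.+2) = false by lia.
have li : (l.+2 == i.+2) = false by lia.
have lj : (l.+2 == j.+2) = false by lia.
have lk : (l.+2 == k.+2) = false by lia.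
have u1 : valid [::] [:: Ordinal Hi2; Ordinal Hj2; Ordinal Hk2; Ordinal Hl2].
  split => //=; rewrite ?inE; lia.
have hdj := fun x => Hdb j x Hj.
have hdl := fun x => Hdb l x Hl.
move=> u v un vn.
pose vd := fun _ : 'I_s => 0.
pose vs := fun o : 'I_s => if val o == i.+2 then u %/ n else if val o == j.+2 then u %% n
   else if val o == k.+2 then v %/ n else v %% n.
have hd : forall o, o \in [::] -> vd o < n * n by [].
have hs : forall o, o \in [:: Ordinal Hi2; Ordinal Hj2; Ordinal Hk2; Ordinal Hl2] -> vs o < n.
  by bnd vs; rewrite ?ji ?ki ?kj ?li ?lj ?lk ?div_lt ?ltn_pmod.
rewrite -[RHS](HG _ _ u1 _ _ hd hs).
apply: eq_card => x; rewrite !inE /sym /vd /vs /= !andbT /composite /radix ?eqxx ?ji ?ki ?kj ?li ?lj ?lk.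
rewrite !digit_eq ?div_digits ?mod_digits ?ltn_ord ?hdj ?hdl //; closeb.
Qed.


Lemma G_perm s n (M : nat -> array n) (D D' S S' : seq 'I_s) :
  perm_eq D D' -> perm_eq S S' -> G M D' S' -> G M D S.
Proof.
move=> pD pS HG vd vs hd hs.
rewrite -(HG vd vs).
- by apply: eq_card => x; rewrite !inE (perm_all _ pD) (perm_all _ pS).
- by move=> i; rewrite -(perm_mem pD); apply: hd.
- by move=> i; rewrite -(perm_mem pS); apply: hs.
Qed.

Lemma sortG s n (M : nat -> array n) :
  (forall D S : seq 'I_s, valid D S ->
     sorted (fun a b : 'I_s => val a <= val b) D ->
     sorted (fun a b : 'I_s => val a <= val b) S -> G M D S) ->
  forall D S : seq 'I_s, valid D S -> G M D S.
Proof.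
move=> H D S [hu hsz].
pose le := fun a b : 'I_s => val a <= val b.
have tot : total le by move=> a b; exact: leq_total.
have pD : perm_eq D (sort le D) by rewrite perm_sym; apply/permPl; exact: perm_sort.
have pS : perm_eq S (sort le S) by rewrite perm_sym; apply/permPl; exact: perm_sort.
apply: (G_perm pD pS); apply: H; last 2 first.
- exact: sort_sorted.
- exact: sort_sorted.
split; last by rewrite !size_sort.
by rewrite -(perm_uniq (perm_map val (perm_cat pD pS))).
Qed.

Ltac fin Hdb2 := apply: eq_card => x; unfold large_row, large_col, composite, radix, sym;
  rewrite !inE /= ?andbT ?inE; rewrite -?val_eqE /= ?digit_eq ?div_digits ?mod_digits
  ?ltn_ord ?Hdb2 ?ltn_pmod //; closeb.

Lemma B2 s n (M : nat -> array n) : 3 <= s -> 0 < n ->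
  (forall i, i < s - 2 -> sudoku (M i)) ->
  (forall i j, i < s - 2 -> j < s - 2 -> i != j ->
     orth_on setT (n * n) (n * n) (M i) (M j)) ->
       (forall i, i < s - 2 -> subsquares_latin (radix (M i))) ->
       (forall i j, i < s - 2 -> j < s - 2 -> i != j ->
          [/\ sudoku (composite (M i) (M j)),
              (forall a : 'I_n,
                 orth_on (large_row a) n (n * n) (radix (M i)) (M j))
            & (forall a : 'I_n,
                 orth_on (large_col a) n (n * n) (radix (M i)) (M j))]) ->
       (forall i j k, i < s - 2 -> j < s - 2 -> k < s - 2 ->
          i != j -> i != k -> j != k ->
          [/\ (forall a : 'I_n,
                 orth_on (large_row a) (n * n) n
                   (composite (M i) (M j)) (radix (M k))),
              (forall a : 'I_n,
                 orth_on (large_col a) (n * n) n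
                   (composite (M i) (M j)) (radix (M k)))
            & orth_on setT (n * n) (n * n) (composite (M i) (M j)) (M k)]) ->
       (forall i j k l, i < s - 2 -> j < s - 2 -> k < s - 2 -> l < s - 2 ->
          uniq [:: i; j; k; l] ->
          orth_on setT (n * n) (n * n)
            (composite (M i) (M j)) (composite (M k) (M l))) ->
  (forall D S : seq 'I_s, valid D S -> G M D S).
Proof.
move=> s3 n0 Hsud Horth Hi Hii Hiii Hiv.
have Hdb2 : forall k x, k.+2 < s -> M k x %/ n < n.
  move=> k x Hk; apply: div_lt; have [] := Hsud k _; first by lia.
  by move=> ->.
apply: sortG => D S [hu hsz].
move: hu hsz.
case: D => [|a [|b [|c D]]]; case: S => [|e [|f [|g [|h [|h' S]]]]] //=.
{ case: e => [[|[|ke]] He]; case: f => [[|[|kf]] Hf]; case: g => [[|[|kg]] Hg];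
  case: h => [[|[|kh]] Hh] //=.
  all: move=> hu _ sD sS; try (exfalso; move: hu sD sS; rewrite /= ?inE; lia).
  all: move=> vd vs _ /(allP (a := fun o => vs o < n)) /= /and5P[b1 b2 b3 b4 _].
  - have [[_ _ _ Hsq] _ _] := Hii kg kh ltac:(lia) ltac:(lia) ltac:(move: hu; rewrite /= ?inE; lia).
    rewrite -[RHS](Hsq (Ordinal b1) (Ordinal b2) _ (digit_lt b3 b4)); fin Hdb2.
  - have [Hr _ _] := Hiii kf kg kh ltac:(lia) ltac:(lia) ltac:(lia)
      ltac:(move: hu; rewrite /= ?inE; lia) ltac:(move: hu; rewrite /= ?inE; lia)
      ltac:(move: hu; rewrite /= ?inE; lia).
    rewrite -[RHS](Hr (Ordinal b1) _ _ (digit_lt b2 b3) b4); fin Hdb2.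
  - have [_ Hc _] := Hiii kf kg kh ltac:(lia) ltac:(lia) ltac:(lia)
      ltac:(move: hu; rewrite /= ?inE; lia) ltac:(move: hu; rewrite /= ?inE; lia)
      ltac:(move: hu; rewrite /= ?inE; lia).
    rewrite -[RHS](Hc (Ordinal b1) _ _ (digit_lt b2 b3) b4); fin Hdb2.
  - have Ho := Hiv ke kf kg kh ltac:(lia) ltac:(lia) ltac:(lia) ltac:(lia)
      ltac:(move: hu; rewrite /= ?inE; lia).
    rewrite -[RHS](Ho _ _ (digit_lt b1 b2) (digit_lt b3 b4)); fin Hdb2. }
{ case: a => [[|[|ka]] Ha]; case: e => [[|[|ke]] He]; case: f => [[|[|kf]] Hf] //=.
  all: move=> hu _ sD sS; try (exfalso; move: hu sD sS; rewrite /= ?inE; lia).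
  all: move=> vd vs /(allP (a := fun o => vd o < n * n)) /= /andP[d1 _]
         /(allP (a := fun o => vs o < n)) /= /and3P[b1 b2 _].
  - have [Hp1 _] := Hi kf ltac:(lia).
    rewrite -[RHS](Hp1 (Ordinal (div_lt d1)) (Ordinal b1)
       (Ordinal (ltn_pmod (vd (Ordinal Ha)) n0)) _ b2); fin Hdb2.
  - have [[_ Hrow _ _] _ _] := Hii ke kf ltac:(lia) ltac:(lia) ltac:(move: hu; rewrite /= ?inE; lia).
    rewrite -[RHS](Hrow (Ordinal (div_lt d1))
       (Ordinal (ltn_pmod (vd (Ordinal Ha)) n0)) _ (digit_lt b1 b2)); fin Hdb2.
  - have [_ Hp2] := Hi kf ltac:(lia).
    rewrite -[RHS](Hp2 (Ordinal b1) (Ordinal (div_lt d1))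
       (Ordinal (ltn_pmod (vd (Ordinal Ha)) n0)) _ b2); fin Hdb2.
  - have [[_ _ Hcol _] _ _] := Hii ke kf ltac:(lia) ltac:(lia) ltac:(move: hu; rewrite /= ?inE; lia).
    rewrite -[RHS](Hcol (Ordinal (div_lt d1))
       (Ordinal (ltn_pmod (vd (Ordinal Ha)) n0)) _ (digit_lt b1 b2)); fin Hdb2.
  - have [_ _ _ Hsq] := Hsud ka ltac:(lia).
    rewrite -[RHS](Hsq (Ordinal b1) (Ordinal b2) _ d1); fin Hdb2.
  - have [_ Hr _] := Hii kf ka ltac:(lia) ltac:(lia) ltac:(move: hu; rewrite /= ?inE; lia).
    rewrite -[RHS](Hr (Ordinal b1) _ _ b2 d1); fin Hdb2.
  - have [_ _ Hc] := Hii kf ka ltac:(lia) ltac:(lia) ltac:(move: hu; rewrite /= ?inE; lia).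
    rewrite -[RHS](Hc (Ordinal b1) _ _ b2 d1); fin Hdb2.
  - have [_ _ Ho] := Hiii ke kf ka ltac:(lia) ltac:(lia) ltac:(lia)
      ltac:(move: hu; rewrite /= ?inE; lia) ltac:(move: hu; rewrite /= ?inE; lia)
      ltac:(move: hu; rewrite /= ?inE; lia).
    rewrite -[RHS](Ho _ _ (digit_lt b1 b2) d1); fin Hdb2. }
case: a => [[|[|ka]] Ha]; case: b => [[|[|kb]] Hb] //=.
all: move=> hu _ sD sS; try (exfalso; move: hu sD sS; rewrite /= ?inE; lia).
all: move=> vd vs /(allP (a := fun o => vd o < n * n)) /= /and3P[d1 d2 _] _.
- rewrite -[RHS](cards1 ((Ordinal (div_lt d1), Ordinal (ltn_pmod (vd (Ordinal Ha)) n0),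
    Ordinal (div_lt d2), Ordinal (ltn_pmod (vd (Ordinal Hb)) n0)) : loc n)).
  apply: eq_card => x; rewrite !inE /sym /= andbT.
  case: x => [[[x1 x2] x3] x4]; rewrite /lx1 /lx2 /lx3 /lx4 /= !xpair_eqE -!val_eqE /=
    !digit_eq ?ltn_ord //; closeb.
- have [_ Hrow _ _] := Hsud kb ltac:(lia).
  rewrite -[RHS](Hrow (Ordinal (div_lt d1))
       (Ordinal (ltn_pmod (vd (Ordinal Ha)) n0)) _ d2); fin Hdb2.
- have [_ _ Hcol _] := Hsud kb ltac:(lia).
  rewrite -[RHS](Hcol (Ordinal (div_lt d1))
       (Ordinal (ltn_pmod (vd (Ordinal Ha)) n0)) _ d2); fin Hdb2.
- have Ho := Horth ka kb ltac:(lia) ltac:(lia) ltac:(move: hu; rewrite /= ?inE; lia).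
  rewrite -[RHS](Ho _ _ d1 d2); fin Hdb2.
Qed.

Theorem proposition3p2 (s n : nat) (M : nat -> array n) :
  3 <= s -> 1 <= n ->
  (forall i, i < s - 2 -> sudoku (M i)) ->
  (forall i j, i < s - 2 -> j < s - 2 -> i != j ->
     orth_on setT (n * n) (n * n) (M i) (M j)) ->
  (strongly_orthogonal s M <->
   [/\ (* (i) *)
       (forall i, i < s - 2 -> subsquares_latin (radix (M i))),
       (* (ii) *)
       (forall i j, i < s - 2 -> j < s - 2 -> i != j ->
          [/\ sudoku (composite (M i) (M j)),
              (forall a : 'I_n,
                 orth_on (large_row a) n (n * n) (radix (M i)) (M j))
            & (forall a : 'I_n,
                 orth_on (large_col a) n (n * n) (radix (M i)) (M j))]),
       (* (iii) *)
       (forall i j k, i < s - 2 -> j < s - 2 -> k < s - 2 ->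
          i != j -> i != k -> j != k ->
          [/\ (forall a : 'I_n,
                 orth_on (large_row a) (n * n) n
                   (composite (M i) (M j)) (radix (M k))),
              (forall a : 'I_n,
                 orth_on (large_col a) (n * n) n
                   (composite (M i) (M j)) (radix (M k)))
            & orth_on setT (n * n) (n * n) (composite (M i) (M j)) (M k)])
     & (* (iv) *)
       (forall i j k l, i < s - 2 -> j < s - 2 -> k < s - 2 -> l < s - 2 ->
          uniq [:: i; j; k; l] ->
          orth_on setT (n * n) (n * n)
            (composite (M i) (M j)) (composite (M k) (M l)))]).
Proof.
move=> s3 n1 Hsud Horth.
have n0 : 0 < n := n1.
have Hdb : forall k x, k < s - 2 -> M k x %/ n < n.
  by move=> k x /Hsud [Hb _ _ _]; apply: div_lt.
rewrite lemA //; split.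
  move=> HG; split.
  - exact: B1_i.
  - exact: B1_ii.
  - exact: B1_iii.
  - exact: B1_iv.
case=> Hi Hii Hiii Hiv; exact: B2.
Qed.
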